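(* There exist absolute constants $c_*>0$, $K>0$ and $p_0$ such that for every prime $p\geqslant p_0$, the number $T(p)$ of ordered triples $(A,B,C)$ of subsets of $\mathbb{F}_p$ such that $x+y\neq z$ for all $x\in A$, $y\in B$, $z\in C$ satisfies $$|T(p)-3\cdot 4^p|\leqslant K(4-c_* )^p .$$
   Context: $\mathbb{F}_p$ is the field with $p$ elements, viewed as an additive group. The subsets $A,B,C$ may be empty. *)

(* Defs.v *)
From mathcomp Require Import all_boot all_order all_algebra.
From Stdlib Require Import Reals.
Set Implicit Arguments. Unset Strict Implicit. Unset Printing Implicit Defensive.
Import GRing.Theory.

Definition good_triple (p : nat) (t : {set 'F_p} * {set 'F_p} * {set 'F_p}) : bool :=
  [forall x in t.1.1, forall y in t.1.2, forall z in t.2, (GRing.add x y) != z].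

Definition T (p : nat) : nat :=
  #|[set t : {set 'F_p} * {set 'F_p} * {set 'F_p} | good_triple t]|.

(* Main.v *)
Require Import Defs.
From mathcomp Require Import all_boot all_order all_algebra.
From Stdlib Require Import Reals Lra Psatz.
From mathcomp Require Import all_boot all_order all_algebra zify ring.
Set Implicit Arguments. Unset Strict Implicit. Unset Printing Implicit Defensive.
Import GRing.Theory.

Definition st := (bool * bool * bool)%type.
Definition okS (x : st) := ~~ (x.2 && (x.1.1 || x.1.2)).
Definition Rst (x y : st) :=
  [&& okS x, okS y, ~~ (x.1.1 && y.1.2) & ~~ (y.1.1 && x.1.2)].
Definition states : seq st :=
  [:: (false,false,false); (true,false,false); (false,true,false);
      (true,true,false); (false,false,true); (true,false,true);
      (false,true,true); (true,true,true)].
Lemma mem_states x : x \in states.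
Proof. by case: x => [[[] []] []]. Qed.
Definition uw (x : st) : nat :=
  match x with
  | (false,false,false) => 1000 | (true,false,false) => 691
  | (false,true,false) => 691 | (true,true,false) => 514
  | (false,false,true) => 1000 | _ => 1 end.
Definition oR (o : option st) (y : st) :=
  if o is Some x then Rst x y else true.
Fixpoint Lst (n : nat) (o : option st) : seq (seq st) :=
  match n with
  | 0 => [:: [::]]
  | n'.+1 => flatten [seq map (cons y) (Lst n' (Some y)) | y <- states & oR o y]
  end.

Lemma size_Lst n o :
  size (Lst n.+1 o) = sumn [seq size (Lst n (Some y)) | y <- states & oR o y].
Proof.
rewrite /= size_flatten /shape -map_comp; congr sumn; apply: eq_map => y /=.
by rewrite size_map.
Qed.

Lemma sumn_le (s : seq st) (f g : st -> nat) c k :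
  (forall y, c * f y <= k * g y) ->
  c * sumn (map f s) <= k * sumn (map g s).
Proof.
move=> H; elim: s => [|y s IH]; first by rewrite !muln0.
rewrite [map f _]/= [map g _]/= -/(sumn (_ :: _)) !mulnDr leq_add //.
Qed.

Lemma uw_pos x : 0 < uw x.
Proof. by case: x => [[[] []] []]. Qed.

Lemma transfer x : 10 * sumn [seq uw y | y <- states & Rst x y] <= 39 * uw x.
Proof. by case: x => [[[] []] []]. Qed.

Lemma Lst_bound n x : 10 ^ n * size (Lst n (Some x)) <= uw x * 39 ^ n.
Proof.
elim: n x => [|n IH] x; first by rewrite !expn0 mul1n muln1 uw_pos.
rewrite size_Lst /= expnS -mulnA.
have H1 : 10 ^ n * sumn [seq size (Lst n (Some y)) | y <- states & Rst x y]
   <= 39 ^ n * sumn [seq uw y | y <- states & Rst x y].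
  by apply: sumn_le => y /=; rewrite [39 ^ n * _]mulnC; apply: IH.
apply: leq_trans (leq_mul (leqnn 10) H1) _.
have T := transfer x.
move: T; set a := sumn _; set b := 39 ^ n; move=> T.
rewrite expnS -/b.
have -> : uw x * (39 * b) = b * (39 * uw x) by rewrite mulnCA [RHS]mulnCA (mulnC b).
by rewrite mulnCA leq_mul2l T orbT.
Qed.

Lemma Lst_bound_all n :
  10 ^ n * size (Lst n.+1 None) <= sumn [seq uw y | y <- states & oR None y] * 39 ^ n.
Proof.
rewrite size_Lst [X in _ <= X]mulnC; apply: sumn_le => y /=; rewrite [X in _ <= X]mulnC; exact: Lst_bound.
Qed.

Lemma mkseq_cons (T : Type) (f : nat -> T) n :
  mkseq f n.+1 = f 0 :: mkseq (fun k => f k.+1) n.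
Proof. by rewrite /mkseq /= -[1]addn0 iotaDl -map_comp. Qed.

Lemma Lst_S n o : Lst n.+1 o =
  flatten [seq map (cons y) (Lst n (Some y)) | y <- states & oR o y].
Proof. by []. Qed.

Lemma mem_Lst n (f : nat -> st) o :
  (0 < n -> oR o (f 0)) -> (forall k, k.+1 < n -> Rst (f k) (f k.+1)) ->
  mkseq f n \in Lst n o.
Proof.
elim: n f o => [|n IH] f o H0 H; first by rewrite inE.
rewrite mkseq_cons Lst_S; apply/flattenP.
exists (map (cons (f 0)) (Lst n (Some (f 0)))).
  by apply/mapP; exists (f 0) => //; rewrite mem_filter H0 // mem_states.
rewrite mem_map; last by move=> a b [].
apply: IH => [Hn|k Hk]; last by apply: H.
by apply: (H 0).
Qed.

Open Scope ring_scope.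

Definition Tr (p : nat) := ({set 'F_p} * {set 'F_p} * {set 'F_p})%type.

Definition stf (p : nat) (a b : 'F_p) (t : Tr p) (w : 'F_p) : st :=
  ((w - b \in t.1.1, w - a \in t.1.2), w \in t.2).

Definition ek (p : nat) (k : nat) : 'F_p :=
  if odd k then - ((k.+1)./2)%:R else (k./2)%:R.

Definition wk (p : nat) (a b c c' : 'F_p) (k : nat) : 'F_p :=
  (a + b + c + (c' - c)) / 2%:R + ek p k * (c' - c).

Lemma goodP p (t : Tr p) x y :
  good_triple t -> x \in t.1.1 -> y \in t.1.2 -> x + y \in t.2 -> False.
Proof.
move=> /forall_inP/(_ x) H Hx Hy Hz.
by move: (H Hx) => /forall_inP/(_ y Hy)/forall_inP/(_ _ Hz); rewrite eqxx.
Qed.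

Lemma edgeR p (t : Tr p) a b u v :
  good_triple t -> a \in t.1.1 -> b \in t.1.2 -> u + v - a - b \in t.2 ->
  Rst (stf a b t u) (stf a b t v).
Proof.
move=> G Ha Hb Huv.
have ok w : okS (stf a b t w).
  rewrite /okS /=; apply/negP => /andP [Hw /orP [H|H]].
  - by apply: (goodP G H Hb); rewrite subrK.
  - by apply: (goodP G Ha H); rewrite addrC subrK.
rewrite /Rst !ok /=; apply/andP; split; apply/negP => /andP [H1 H2].
- by apply: (goodP G H1 H2); rewrite (_ : u - b + (v - a) = u + v - a - b) //; ring.
- by apply: (goodP G H1 H2); rewrite (_ : v - b + (u - a) = u + v - a - b) //; ring.
Qed.

Lemma ek_sum p k : ek p k + ek p k.+1 = if odd k then 0 else -1.
Proof.
rewrite /ek /=; case: (boolP (odd k)) => Hk /=.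
  by rewrite addrC subrr.
have [m Hm] : exists m, k = m.*2.
  by exists k./2; rewrite -[k in LHS]odd_double_half (negbTE Hk).
by rewrite -[(k./2).+1]addn1 natrD; ring.
Qed.

Lemma wk_edge p (a b c c' : 'F_p) k : (2%:R : 'F_p) != 0 ->
  wk a b c c' k + wk a b c c' k.+1 - a - b = if odd k then c' else c.
Proof.
move=> H2.
have E : wk a b c c' k + wk a b c c' k.+1 =
  (a + b + c + (c' - c)) + (ek p k + ek p k.+1) * (c' - c).
  rewrite /wk; field; done.
rewrite E ek_sum; case: (odd k); ring.
Qed.

Lemma ek_surj p n : prime p -> (n < p)%N -> exists2 k, (k < p)%N & ek p k = n%:R.
Proof.
move=> pr np; case: (ltnP n.*2 p) => H.
  exists n.*2 => //; by rewrite /ek odd_double half_double.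
exists (p - n.+1).*2.+1; first by lia.
rewrite /ek.
have -> : odd (p - n.+1).*2.+1 = true by rewrite /= odd_double.
rewrite -doubleS half_double.
have -> : (p - n.+1).+1 = (p - n)%N by lia.
by rewrite natrB ?(ltnW np) // pchar_Fp_0 // sub0r opprK.
Qed.

Lemma wk_surj p (a b c c' : 'F_p) x : prime p -> c' != c ->
  exists2 k, (k < p)%N & wk a b c c' k = x.
Proof.
move=> pr Hd.
have d0 : c' - c != 0 by rewrite subr_eq0.
set e := (x - (a + b + c + (c' - c)) / 2%:R) / (c' - c).
have ep : ((e : nat) < p)%N by rewrite -[X in (_ < X)%N](Fp_cast pr) ltn_ord.
have [k kp Ek] := ek_surj pr ep.
exists k => //; rewrite /wk Ek natr_Zp /e divfK // addrC subrK //=.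
Qed.

Definition code (p : nat) (q : 'F_p * 'F_p * 'F_p * 'F_p) (t : Tr p) : seq st :=
  mkseq (fun k => stf q.1.1.1 q.1.1.2 t (wk q.1.1.1 q.1.1.2 q.1.2 q.2 k)) p.

Lemma code_inj p q (t1 t2 : Tr p) : prime p -> q.2 != q.1.2 ->
  code q t1 = code q t2 -> t1 = t2.
Proof.
case: q => [[[a b] c] c'] /= pr Hd Hc.
have E x : stf a b t1 x = stf a b t2 x.
  have [k kp <-] := wk_surj a b x pr Hd.
  move: (congr1 (fun s => nth (false,false,false) s k) Hc).
  by rewrite /code !nth_mkseq.
case: t1 t2 E {Hc} => [[A1 B1] C1] [[A2 B2] C2] /= E.
congr (_, _, _); apply/setP => y.
- by move: (E (y + b)) => [] ; rewrite addrK.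
- by move: (E (y + a)) => [] ; rewrite addrK.
- by move: (E y) => [].
Qed.

Lemma code_mem p (a b c c' : 'F_p) (t : Tr p) : prime p -> (2 < p)%N ->
  good_triple t -> a \in t.1.1 -> b \in t.1.2 -> c \in t.2 -> c' \in t.2 ->
  code (a, b, c, c') t \in Lst p None.
Proof.
move=> pr p2 G Ha Hb Hc Hc'.
have H2 : (2%:R : 'F_p) != 0.
  apply/eqP => H; have := congr1 (fun x : 'F_p => nat_of_ord x) H.
  by rewrite val_Fp_nat // modn_small.
apply: mem_Lst => // k _ /=.
apply: edgeR => //; rewrite wk_edge //; by case: (odd k).
Qed.

Definition pk (p : nat) (A : {set 'F_p}) : 'F_p := odflt 0 [pick x in A].

Lemma pkP p (A : {set 'F_p}) : A != set0 -> pk A \in A.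
Proof.
rewrite /pk; case: pickP => [x /= -> //|H /set0Pn [x Hx]].
by move: (H x); rewrite Hx.
Qed.

Definition fp (p : nat) (t : Tr p) : 'F_p * 'F_p * 'F_p * 'F_p :=
  (pk t.1.1, pk t.1.2, pk t.2, pk (t.2 :\ pk t.2)).

Definition Sgood (p : nat) : {set Tr p} :=
  [set t : Tr p | [&& good_triple t, t.1.1 != set0, t.1.2 != set0 & (1 < #|t.2|)%N]].

Lemma fp_props p (t : Tr p) : t \in Sgood p ->
  [/\ good_triple t, (fp t).1.1.1 \in t.1.1, (fp t).1.1.2 \in t.1.2,
      (fp t).1.2 \in t.2 & (fp t).2 \in t.2 /\ (fp t).2 != (fp t).1.2].
Proof.
rewrite inE => /and4P [G HA HB HC].
have C0 : t.2 != set0 by rewrite -card_gt0 (ltn_trans _ HC).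
have C1 : t.2 :\ pk t.2 != set0.
  by rewrite -card_gt0; move: HC; rewrite (cardsD1 (pk t.2)) pkP //.
have := pkP C1; rewrite in_setD1 => /andP [H1 H2].
by split => //=; apply: pkP.
Qed.

Lemma Sgood_bound p : prime p -> (2 < p)%N ->
  (#|Sgood p| <= p ^ 4 * size (Lst p None))%N.
Proof.
move=> pr p2.
pose g (t : Tr p) := (fp t, code (fp t) t).
have U : uniq (map g (enum (Sgood p))).
  rewrite map_inj_in_uniq ?enum_uniq // => t1 t2.
  rewrite !mem_enum => H1 H2 E.
  have /= E1 := congr1 fst E; have /= E2 := congr1 snd E.
  have [_ _ _ _ [_ Hd]] := fp_props H1.
  apply: (@code_inj p (fp t1) t1 t2 pr Hd); by rewrite E2 E1.
rewrite cardE -(size_map g).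
pose s2 := [seq (x, y) | x <- enum [set: 'F_p * 'F_p * 'F_p * 'F_p], y <- Lst p None].
have S : {subset map g (enum (Sgood p)) <= s2}.
  move=> z /mapP [t]; rewrite mem_enum => Ht ->.
  have [G Ha Hb Hc [Hc' _]] := fp_props Ht.
  apply/allpairsP; exists (fp t, code (fp t) t); split => //.
    by rewrite mem_enum inE.
  by move: Ha Hb Hc Hc'; case: (fp t) => [[[a b] c] c']; apply: code_mem.
apply: leq_trans (uniq_leq_size U S) _.
rewrite size_allpairs -cardE cardsT !card_prod card_Fp //.
by rewrite !expnS expn0 muln1 !mulnA.
Qed.

Close Scope ring_scope.

Lemma card_setT (T : finType) : #|{set T}| = 2 ^ #|T|.
Proof.
have E : [set: {set T}] = powerset [set: T].
  by apply/setP => A; rewrite powersetE subsetT inE.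
transitivity #|[set: {set T}]|; first by rewrite cardsT.
by rewrite E card_powerset cardsT.
Qed.

Lemma card_U3 (T : finType) (A B C : {set T}) :
  #|A :|: B :|: C| <= #|A| + #|B| + #|C|.
Proof.
have := cardsUI (A :|: B) C; have := cardsUI A B; lia.
Qed.

Definition Nn (p : nat) : {set Tr p} :=
  [set t : Tr p | [&& good_triple t, t.1.1 != set0, t.1.2 != set0 & t.2 != set0]].
Definition Ssym (p : nat) : {set Tr p} :=
  [set t : Tr p | [&& good_triple t, t.1.1 != set0, t.1.2 != set0 & t.2 != set0]
     && (#|t.2| <= 1) && (1 < #|t.1.1|)].
Definition X1 (p : nat) : {set {set 'F_p}} := [set A : {set 'F_p} | #|A| <= 1].
Definition Stiny (p : nat) : {set Tr p} := setX (setX (X1 p) setT) (X1 p).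

Definition hsym (p : nat) (t : Tr p) : Tr p :=
  (t.2, [set (- y)%R | y in t.1.2], t.1.1).

Lemma mem_neg p (B : {set 'F_p}) y : ((- y)%R \in [set (- z)%R | z in B]) = (y \in B).
Proof. by rewrite mem_imset //; exact: oppr_inj. Qed.

Lemma Ssym_bound p : #|Ssym p| <= #|Sgood p|.
Proof.
rewrite -(@card_in_imset _ _ (@hsym p)).
  apply: subset_leq_card; apply/subsetP => u /imsetP [t].
  rewrite !inE => /andP [/andP [/and4P [G HA HB HC] _] H2] -> /=.
  rewrite HC H2 andbT /=; apply/andP; split.
  - apply/forall_inP => z Hz; apply/forall_inP => y' /imsetP [y Hy ->].
    apply/forall_inP => x Hx; apply/negP => /eqP E.
    by apply: (goodP G Hx Hy); rewrite -E subrK.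
  - by apply/set0Pn; case/set0Pn: HB => y Hy; exists (- y)%R; rewrite mem_neg.
move=> [[A1 B1] C1] [[A2 B2] C2] _ _ [E1 E2 E3].
congr (_, _, _) => //; apply/setP => y.
by rewrite -mem_neg E2 mem_neg.
Qed.

Lemma X1_bound p : prime p -> #|X1 p| <= p.+1.
Proof.
move=> pr.
have S : X1 p \subset set0 |: [set [set x] | x in [set: 'F_p]].
  apply/subsetP => A; rewrite !inE leq_eqVlt ltnS leqn0 => /orP [/cards1P [x ->]|/eqP H].
    by rewrite imset_f ?orbT // inE.
  by rewrite (cards0_eq H) eqxx.
apply: leq_trans (subset_leq_card S) _.
rewrite cardsU1 (_ : p.+1 = 1 + p)%N //; apply: leq_add; first by case: (_ \notin _).
by apply: leq_trans (leq_imset_card _ _) _; rewrite cardsT card_Fp.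
Qed.

Lemma Stiny_bound p : prime p -> #|Stiny p| <= p.+1 * 2 ^ p * p.+1.
Proof.
move=> pr; rewrite !cardsX cardsT card_setT card_Fp //.
by apply: leq_mul; [apply: leq_mul|]; rewrite ?X1_bound.
Qed.

Lemma Nn_bound p : prime p -> #|Nn p| <= #|Sgood p| + #|Sgood p| + p.+1 * 2 ^ p * p.+1.
Proof.
move=> pr.
have S : Nn p \subset Sgood p :|: Ssym p :|: Stiny p.
  apply/subsetP => t; rewrite !inE => /and4P [G HA HB HC].
  rewrite G HA HB HC /=.
  case: (ltnP 1 #|t.2|) => H2 //=; rewrite ?orbT //.
  case: (ltnP 1 #|t.1.1|) => H1 //=; rewrite ?orbT //.
apply: leq_trans (subset_leq_card S) _.
apply: leq_trans (card_U3 _ _ _) _.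
by rewrite leq_add // ?leq_add // ?Ssym_bound // Stiny_bound.
Qed.

Definition Z1 (p : nat) : {set Tr p} := [set t : Tr p | t.1.1 == set0].
Definition Z2 (p : nat) : {set Tr p} := [set t : Tr p | t.1.2 == set0].
Definition Z3 (p : nat) : {set Tr p} := [set t : Tr p | t.2 == set0].

Lemma cardZ1 p : prime p -> #|Z1 p| = 2 ^ p * 2 ^ p.
Proof.
move=> pr.
have -> : Z1 p = setX (setX [set set0] setT) setT.
  by apply/setP => [[[A B] C]]; rewrite !inE /= !andbT.
by rewrite !cardsX cards1 !cardsT card_setT card_Fp // mul1n.
Qed.
Lemma cardZ2 p : prime p -> #|Z2 p| = 2 ^ p * 2 ^ p.
Proof.
move=> pr.
have -> : Z2 p = setX (setX setT [set set0]) setT.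
  by apply/setP => [[[A B] C]]; rewrite !inE /= !andbT.
by rewrite !cardsX cards1 !cardsT card_setT card_Fp // muln1.
Qed.
Lemma cardZ3 p : prime p -> #|Z3 p| = 2 ^ p * 2 ^ p.
Proof.
move=> pr.
have -> : Z3 p = setX (setX setT setT) [set set0].
  by apply/setP => [[[A B] C]]; rewrite !inE /=.
by rewrite !cardsX cards1 !cardsT card_setT card_Fp // muln1.
Qed.

Lemma cardZI p (Za Zb : {set Tr p}) (i j : 'I_3) : prime p ->
  (forall t, t \in Za :&: Zb -> (t.1.1 == set0) && (t.1.2 == set0) ||
     (t.1.1 == set0) && (t.2 == set0) || (t.1.2 == set0) && (t.2 == set0)) ->
  #|Za :&: Zb| <= 2 ^ p + 2 ^ p + 2 ^ p.
Proof.
move=> pr H.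
have S : Za :&: Zb \subset setX (setX [set set0] [set set0]) setT :|:
   setX (setX [set set0] setT) [set set0] :|: setX (setX setT [set set0]) [set set0].
  apply/subsetP => -[[A B] C] /H /=; rewrite !inE /= !andbT.
  by case/orP => [/orP [->|->]|->]; rewrite ?orbT.
apply: leq_trans (subset_leq_card S) _.
apply: leq_trans (card_U3 _ _ _) _.
by rewrite !cardsX !cards1 !cardsT card_setT card_Fp // ?mul1n ?muln1.
Qed.

Lemma E_good p (t : Tr p) : t \in Z1 p :|: Z2 p :|: Z3 p -> good_triple t.
Proof.
rewrite !inE => /orP [/orP [/eqP H|/eqP H]|/eqP H];
  apply/forall_inP => x Hx; apply/forall_inP => y Hy; apply/forall_inP => z Hz.
- by move: Hx; rewrite H inE.
- by move: Hy; rewrite H inE.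
- by move: Hz; rewrite H inE.
Qed.

Lemma T_split p : T p = #|Z1 p :|: Z2 p :|: Z3 p| + #|Nn p|.
Proof.
rewrite /T -(cardsID (Z1 p :|: Z2 p :|: Z3 p) [set t : Tr p | good_triple t]).
congr (_ + _).
  have Sub : Z1 p :|: Z2 p :|: Z3 p \subset [set t : Tr p | good_triple t].
    by apply/subsetP => t Ht; rewrite inE; exact: E_good.
  by rewrite (setIidPr Sub).
apply: eq_card => t; rewrite !inE /=.
by case: (good_triple t); rewrite ?andbT ?andbF // !negb_or -!andbA.
Qed.

Lemma E_bounds p : prime p ->
  #|Z1 p :|: Z2 p :|: Z3 p| <= 3 * (2 ^ p * 2 ^ p) /\
  3 * (2 ^ p * 2 ^ p) <= #|Z1 p :|: Z2 p :|: Z3 p| + 9 * 2 ^ p.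
Proof.
move=> pr; have := card_U3 (Z1 p) (Z2 p) (Z3 p).
rewrite cardZ1 // cardZ2 // cardZ3 // => H1; split; first by lia.
have := cardsUI (Z1 p :|: Z2 p) (Z3 p).
have := cardsUI (Z1 p) (Z2 p).
rewrite setIUl.
have := card_U3 (Z1 p :&: Z3 p) (Z2 p :&: Z3 p) set0.
have B12 := @cardZI p (Z1 p) (Z2 p) ord0 ord0 pr.
have B13 := @cardZI p (Z1 p) (Z3 p) ord0 ord0 pr.
have B23 := @cardZI p (Z2 p) (Z3 p) ord0 ord0 pr.
rewrite setU0 cards0 addn0 cardZ1 // cardZ2 // cardZ3 //.
have H12 : #|Z1 p :&: Z2 p| <= 2 ^ p + 2 ^ p + 2 ^ p.
  by apply: B12 => t; rewrite !inE => /andP [-> ->].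
have H13 : #|Z1 p :&: Z3 p| <= 2 ^ p + 2 ^ p + 2 ^ p.
  by apply: B13 => t; rewrite !inE => /andP [-> ->]; rewrite orbT.
have H23 : #|Z2 p :&: Z3 p| <= 2 ^ p + 2 ^ p + 2 ^ p.
  by apply: B23 => t; rewrite !inE => /andP [-> ->]; rewrite !orbT.
lia.
Qed.

Definition Mc : nat := locked (1944 * 390 ^ 4).
Definition Knat : nat := locked ((978 * 800) * Mc).

Lemma binom_lb n a b : 4 <= n -> 'C(n, 4) * (a ^ (n - 4) * b ^ 4) <= (a + b) ^ n.
Proof.
move=> Hn; rewrite expnDn (bigD1 (Ordinal (_ : 4 < n.+1))) //=.
exact: leq_addr.
Qed.

Lemma fact_lb m : (m + 6) ^ 4 <= 1944 * 'C(m + 5, 4).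
Proof.
have E : 'C(m + 5, 4) * 24 = (m + 5) * ((m + 4) * ((m + 3) * ((m + 2) * 1))).
  rewrite (_ : 24 = 4`!) // bin_ffact !ffactnS ffactn0.
  by rewrite (_ : (m + 5).-1 = m + 4) 1?(_ : (m + 4).-1 = m + 3)
    1?(_ : (m + 3).-1 = m + 2) //; lia.
have H : (m + 6) ^ 4 <= 81 * ((m + 5) * ((m + 4) * ((m + 3) * ((m + 2) * 1)))).
  apply: (@leq_trans ((3*(m+5)) * ((3*(m+4)) * ((3*(m+3)) * ((3*(m+2)) * 1))))).
    by rewrite !expnS expn0; repeat apply: leq_mul => //; lia.
  by rewrite leq_eqVlt; apply/orP; left; apply/eqP; ring.
rewrite (_ : 1944 = 81 * 24) // -mulnA [24 * _]mulnC E //.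
Qed.

Lemma poly_exp n : 5 <= n -> (n.+1) ^ 4 * 390 ^ n * (81 * 81) <= Mc * 399 ^ n.
Proof.
move=> Hn; have [m ->] : exists m, n = m + 5 by exists (n - 5); lia.
have B := binom_lb 390 9 (_ : 4 <= m + 5).
have F := fact_lb m.
rewrite (_ : (m + 5).+1 = m + 6); last by lia.
rewrite (_ : 390 ^ (m + 5) = 390 ^ (m + 5 - 4) * 390 ^ 4); last first.
  by rewrite -expnD; congr (_ ^ _); lia.
apply: (@leq_trans (1944 * 'C(m + 5, 4) * (390 ^ (m + 5 - 4) * 390 ^ 4) * (81 * 81))).
  by rewrite !leq_mul2r F !orbT.
rewrite /Mc -lock (_ : (81 * 81) = 9 ^ 4) //.
apply: (@leq_trans (1944 * 390 ^ 4 * ('C(m + 5, 4) * (390 ^ (m + 5 - 4) * 9 ^ 4)))).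
  by rewrite leq_eqVlt; apply/orP; left; apply/eqP; ring.
by rewrite leq_mul2l B ?orbT //; lia.
Qed.

Lemma S0E : sumn [seq uw y | y <- states & oR None y] = 3899.
Proof. by []. Qed.

Lemma nat_main n : 5 <= n -> prime n.+1 ->
  (81 * 81) * (100 ^ n.+1 * (#|Nn n.+1| + 9 * 2 ^ n.+1)) <= Knat * 399 ^ n.
Proof.
rewrite /Knat -lock.
move=> Hn pr.
have p2 : 2 < n.+1 by lia.
set Q := (n.+1) ^ 4 * 390 ^ n.
have HQ : Q * (81 * 81) <= Mc * 399 ^ n by apply: poly_exp.
set sz := size (Lst n.+1 None).
have Hsz : 10 ^ n * sz <= 3899 * 39 ^ n by rewrite -S0E; apply: Lst_bound_all.
have Hsg := Sgood_bound pr p2.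
have HN := Nn_bound pr.
have E100 : 100 ^ n.+1 = 100 * (10 ^ n * 10 ^ n).
  by rewrite expnS -expnMn.
have E390 : 390 ^ n = 10 ^ n * 39 ^ n by rewrite -expnMn.
have E200 : 200 ^ n = 100 ^ n * 2 ^ n by rewrite -expnMn.
have HA : 100 ^ n.+1 * #|Sgood n.+1| <= (3899 * 100) * Q.
  apply: (@leq_trans (100 ^ n.+1 * ((n.+1) ^ 4 * sz))); first by rewrite leq_mul2l Hsg orbT.
  apply: (@leq_trans (100 * (n.+1) ^ 4 * 10 ^ n * (3899 * 39 ^ n))).
    rewrite E100 (_ : 100 * (10 ^ n * 10 ^ n) * ((n.+1) ^ 4 * sz) =
       100 * (n.+1) ^ 4 * 10 ^ n * (10 ^ n * sz)); last by ring.
    by rewrite leq_mul2l Hsz orbT.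
  by rewrite /Q E390 leq_eqVlt; apply/orP; left; apply/eqP; ring.
have H200 : 200 ^ n <= 390 ^ n by rewrite leq_exp2r //; lia.
have Hpow : (n.+2) * (n.+2) <= 4 * (n.+1) ^ 4.
  apply: (@leq_trans ((2 * n.+1) * (2 * n.+1))); first by apply: leq_mul; lia.
  rewrite (_ : 2 * n.+1 * (2 * n.+1) = 4 * (n.+1 * n.+1)); last by ring.
  rewrite leq_mul2l /= !expnS expn0 muln1.
  by apply: leq_mul => //; rewrite -{1}(muln1 n.+1) leq_mul2l /= muln_gt0.
have HB : 100 ^ n.+1 * (n.+2 * 2 ^ n.+1 * n.+2) <= 800 * Q.
  rewrite (_ : 100 ^ n.+1 * (n.+2 * 2 ^ n.+1 * n.+2) = 200 * (n.+2 * n.+2) * 200 ^ n);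
    last by rewrite E200 !expnS; ring.
  apply: (@leq_trans (200 * (4 * (n.+1) ^ 4) * 390 ^ n)).
    by apply: leq_mul => //; rewrite leq_mul2l Hpow orbT.
  by rewrite /Q leq_eqVlt; apply/orP; left; apply/eqP; ring.
have HC : 100 ^ n.+1 * (9 * 2 ^ n.+1) <= 1800 * Q.
  rewrite (_ : 100 ^ n.+1 * (9 * 2 ^ n.+1) = 1800 * 200 ^ n);
    last by rewrite E200 !expnS; ring.
  rewrite /Q leq_mul2l /=; apply: (leq_trans H200).
  by rewrite -{1}(mul1n (390 ^ n)) leq_mul2r expn_gt0 /= orbT.
have HD : 100 ^ n.+1 * (#|Nn n.+1| + 9 * 2 ^ n.+1) <= (978 * 800) * Q.
  rewrite mulnDr.
  have H1 := leq_mul (leqnn (100 ^ n.+1)) HN.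
  rewrite !mulnDr in H1.
  apply: leq_trans (leq_add H1 HC) _.
  apply: leq_trans (leq_add (leq_add (leq_add HA HA) HB) (leqnn _)) _.
  lia.
apply: (@leq_trans ((81 * 81) * ((978 * 800) * Q))); first by rewrite leq_mul2l HD orbT.
rewrite mulnCA (mulnC (81 * 81) Q) -[X in _ <= X]mulnA leq_mul2l HQ orbT //.
Qed.


From Stdlib Require Import Lra Psatz.
Lemma Knat_pos : 0 < Knat.
Proof.
have M0 : 0 < Mc by rewrite /Mc -lock muln_gt0 expn_gt0.
have A : 0 < 978 * 800 by rewrite muln_gt0.
rewrite /Knat -lock; exact: (leq_mul A M0).
Qed.

Open Scope R_scope.
Lemma leR (a b : nat) : (a <= b)%N -> INR a <= INR b.
Proof. by move/leP; apply: le_INR. Qed.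

Lemma INR_mul (a b : nat) : INR (a * b)%N = INR a * INR b.
Proof. by rewrite -multE mult_INR. Qed.

Lemma INR_add (a b : nat) : INR (a + b)%N = INR a + INR b.
Proof. by rewrite -plusE plus_INR. Qed.

Lemma INR_expn (m n : nat) : INR (m ^ n)%N = INR m ^ n.
Proof.
elim: n => [|n IH]; first by rewrite expn0.
by rewrite expnS INR_mul IH.
Qed.


Lemma INR2 : INR 2 = 2.
Proof. by rewrite INR_IZR_INZ. Qed.
Lemma INR100 : INR 100 = 100.
Proof. by rewrite INR_IZR_INZ. Qed.
Lemma INR399 : INR 399 = 399.
Proof. by rewrite INR_IZR_INZ. Qed.
Lemma INR3 : INR 3 = 3.
Proof. by rewrite INR_IZR_INZ. Qed.
Lemma INR9 : INR 9 = 9.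
Proof. by rewrite INR_IZR_INZ. Qed.

Lemma conv (a b c d : nat) :
  INR (a * a * (b * (c + 9 * d)))%N = INR a * INR a * (INR b * (INR c + 9 * INR d)).
Proof.
rewrite (INR_mul (a * a) (b * (c + 9 * d))) (INR_mul a a) (INR_mul b (c + 9 * d)).
by rewrite (INR_add c (9 * d)) (INR_mul 9 d) INR9.
Qed.

Theorem theorem4 :
  exists (cstar K : R) (p0 : nat), 0 < cstar /\ 0 < K /\
    forall p : nat, prime p -> leq p0 p ->
      Rabs (INR (T p) - 3 * 4 ^ p) <= K * (4 - cstar) ^ p.
Proof.
exists (1 / 100), (INR Knat), 6%N; split; first lra.
split; first by apply: lt_0_INR; apply/ltP; exact: Knat_pos.
move=> [|n] pr H6 //.
have H5 : (5 <= n)%N by [].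
have TS := T_split n.+1.
have [EU EL] := E_bounds pr.
have NM := nat_main H5 pr.
set e := #|Z1 n.+1 :|: Z2 n.+1 :|: Z3 n.+1| in TS EU EL.
set nn := #|Nn n.+1| in TS NM.
have h4 : INR (2 ^ n.+1 * 2 ^ n.+1)%N = 4 ^ n.+1.
  rewrite INR_mul INR_expn INR2 -Rpow_mult_distr; congr (_ ^ _); lra.
have hT : INR (T n.+1) = INR e + INR nn by rewrite TS INR_add.
have hEU := leR EU; rewrite INR_mul h4 INR3 in hEU.
have hEL := leR EL; rewrite INR_add INR_mul h4 INR3 INR_mul INR_expn INR2 INR9 in hEL.
have hNM := leR NM.
rewrite conv (INR_mul Knat (399 ^ n)) (INR_expn 100 n.+1) (INR_expn 2 n.+1) (INR_expn 399 n) INR100 INR399 INR2 in hNM.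
set X := INR nn + 9 * 2 ^ n.+1 in hNM.
have h81 : 1 <= INR 81.
  by apply: (@leR 1 81).
have hX0 : 0 <= X.
  rewrite /X; have := pos_INR nn; have := pow_le 2 n.+1; lra.
have hp100 : 0 < 100 ^ n.+1 by apply: pow_lt; lra.
have hK : 0 <= INR Knat by apply: pos_INR.

have h399 : 399 ^ n <= 399 ^ n.+1.
  rewrite /= -[X in X <= _]Rmult_1_l; apply: Rmult_le_compat_r; first by apply: pow_le; lra.
  lra.
have hXb : X * 100 ^ n.+1 <= INR Knat * 399 ^ n.+1.
  have A1 : X * 100 ^ n.+1 <= INR 81 * INR 81 * (100 ^ n.+1 * X).
    have : 0 <= 100 ^ n.+1 * X by apply: Rmult_le_pos; lra.
    have : 1 <= INR 81 * INR 81.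
      by rewrite -[1]Rmult_1_l; apply: Rmult_le_compat; lra.
    nra.
  apply: Rle_trans A1 _; apply: Rle_trans hNM _.
  by apply: Rmult_le_compat_l.
have hXK : X <= INR Knat * (4 - 1 / 100) ^ n.+1.
  apply: (Rmult_le_reg_r (100 ^ n.+1)) => //.
  rewrite Rmult_assoc -Rpow_mult_distr.
  have -> : (4 - 1 / 100) * 100 = 399 by lra.
  exact: hXb.
apply: Rle_trans hXK.
have hn0 := pos_INR nn.
have hg0 : 0 <= 2 ^ n.+1 by apply: pow_le; lra.
apply: Rabs_le; rewrite /X in hX0 *; split; lra.
Qed.
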